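(* Let $T$ be a tree on $n\ge3$ vertices with distance matrix $M$, and let $C=M\left(\frac{2}{n}J_n-I_n\right)$. Then $C$ is positive definite in the sense that $\mathbf{x}^TC\mathbf{x}>0$ for every nonzero $\mathbf{x}\in\mathbb{R}^n$.
   Context: The distance matrix $M$ of $T$ is the $n\times n$ matrix whose $(i,j)$ entry is the number of edges on the path between vertices $i$ and $j$ of $T$. $J_n$ is the $n\times n$ all-ones matrix and $I_n$ the identity matrix. $C$ need not be symmetric. *)

(* Defs.v *)
From HB Require Import structures.
From mathcomp Require Import all_boot all_order all_algebra.
From mathcomp Require Import reals.
Set Implicit Arguments. Unset Strict Implicit. Unset Printing Implicit Defensive.
Import Order.TTheory GRing.Theory Num.Theory.

Definition simple_graph (n : nat) (e : rel 'I_n) : Prop :=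
  symmetric e /\ irreflexive e.

Definition edge_set (n : nat) (e : rel 'I_n) : {set 'I_n * 'I_n} :=
  [set p : 'I_n * 'I_n | (nat_of_ord p.1 < nat_of_ord p.2)%N && e p.1 p.2].

Definition is_tree (n : nat) (e : rel 'I_n) : Prop :=
  [/\ simple_graph e, (forall i j, connect e i j) & #|edge_set e| = n.-1].

Definition walk_of_length (n : nat) (e : rel 'I_n) (k : nat) (i j : 'I_n) : bool :=
  [exists p : k.-tuple 'I_n, path e i p && (last i p == j)].

Definition gdist (n : nat) (e : rel 'I_n) (i j : 'I_n) : nat :=
  find (fun k => walk_of_length e k i j) (iota 0 n).

Definition dist_matrix (R : pzRingType) (n : nat) (e : rel 'I_n) : 'M[R]_n :=
  \matrix_(i, j) ((gdist e i j)%:R)%R.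

(* Main.v *)
Require Import Defs.
From HB Require Import structures.
From mathcomp Require Import all_boot all_order all_algebra.
From mathcomp Require Import reals.
From mathcomp Require Import zify ring lra.
Import Order.TTheory GRing.Theory Num.Theory.
Set Implicit Arguments. Unset Strict Implicit. Unset Printing Implicit Defensive.

Definition bfs (V : finType) (e : rel V) (d : V -> V -> nat) :=
  [/\ forall i, d i i = 0%N, forall i w j, e w j -> (d i j <= (d i w).+1)%N &
      forall i j, i != j -> exists2 w, e w j & (d i w).+1 = d i j].

Lemma bfs_tri (V : finType) (e : rel V) d : bfs e d ->
  forall i j k, (d i k <= d i j + d j k)%N.
Proof.
move=> [d0 db dc] i j k.
move: {2}(d j k) (leqnn (d j k)) => m; elim: m k => [|m IH] k hk.
  case: (eqVneq j k) => [<-|njk]; first by rewrite d0 addn0.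
  by have [w _ hw] := dc _ _ njk; move: hk; rewrite -hw.
case: (eqVneq j k) => [<-|njk]; first by rewrite d0 addn0.
have [w ew hw] := dc _ _ njk.
have hw' : (d j w <= m)%N by move: hk; rewrite -hw.
have := IH w hw'; have := db i w k ew; lia.
Qed.

Lemma bfs_sym (V : finType) (e : rel V) d : symmetric e -> bfs e d ->
  forall i j, d i j = d j i.
Proof.
move=> se hb; have [d0 db dc] := hb.
suff H : forall i j, (d j i <= d i j)%N by move=> i j; apply/eqP; rewrite eqn_leq !H.
move=> i j; move: {2}(d i j) (leqnn (d i j)) => m; elim: m j => [|m IH] j hk.
  case: (eqVneq i j) => [<-|nij]; first by rewrite d0.
  by have [w _ hw] := dc _ _ nij; move: hk; rewrite -hw.
case: (eqVneq i j) => [<-|nij]; first by rewrite d0.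
have [w ew hw] := dc _ _ nij.
have hw' : (d i w <= m)%N by move: hk; rewrite -hw.
have := IH w hw'.
have := bfs_tri hb j w i.
have := db j j w; rewrite se ew d0 => /(_ isT).
rewrite -hw; lia.
Qed.

Lemma leaf_dist (V : finType) (e : rel V) d l w : bfs e d ->
  (forall u, e u l -> u = w) -> forall j, j != l -> d j l = (d j w).+1.
Proof.
move=> [d0 db dc] hu j njl; have [w' ew' hw'] := dc _ _ njl.
by rewrite -hw' (hu _ ew').
Qed.

Definition cutsP (R : zmodType) (V : finType) (d : V -> V -> nat) (cs : seq {set V}) :=
  [/\ forall i j, d i j = count (fun A : {set V} => (i \in A) != (j \in A)) cs,
      forall A, A \in cs -> (exists a, a \in A) /\ (exists b, b \notin A) &
      forall x : V -> R, (\sum_i x i = 0 -> (forall A, A \in cs -> \sum_(i in A) x i = 0) ->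
        forall i, x i = 0)%R].

Lemma leaf_exists (V : finType) (e : rel V) N : #|V| = N.+2 ->
  (\sum_i \sum_j (e i j : nat) = 2 * N.+1)%N -> exists l, (\sum_j (e l j : nat) <= 1)%N.
Proof.
move=> hV hs.
have [/existsP //|/existsPn hn] := boolP [exists l, \sum_j (e l j : nat) <= 1]%N.
exfalso.
have : (\sum_(i : V) 2 <= \sum_i \sum_j (e i j : nat))%N.
  by apply: leq_sum => i _; move: (hn i); rewrite -ltnNge.
by rewrite sum_nat_const cardT -cardE hV hs; lia.
Qed.

Lemma deg1_uniq (V : finType) (e : rel V) l w :
  (\sum_j (e l j : nat) <= 1)%N -> e l w -> forall u, e l u -> u = w.
Proof.
move=> hd ew u eu; apply/eqP; apply/negPn/negP => nuw.
move: hd; rewrite (bigD1 w) //= (bigD1 u) /=; last by rewrite nuw.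
by rewrite ew eu.
Qed.

Lemma tree_cuts (R : zmodType) N : forall (V : finType) (e : rel V) d,
  #|V| = N.+1 -> symmetric e -> irreflexive e ->
  (\sum_i \sum_j (e i j : nat) = 2 * N)%N -> bfs e d ->
  exists cs, cutsP R d cs.
Proof.
elim: N => [|N IH] V e d hV se ie hs hb.
  exists [::]; split => //.
  - move=> i j; have [z hz] := fintype1 hV; rewrite (hz i) (hz j).
    by have [->] := hb.
  - move=> x hx _ i; move: hx; have [z hz] := fintype1 hV.
    by rewrite (big_pred1 z) ?(hz i) // => k; rewrite (hz k) !inE eqxx.
have [l hl] := leaf_exists hV hs.
have [j njl] : exists j, j != l.
  apply/card_gt0P; rewrite cardC1 hV //.
have [d0 db dc] := hb.
have [w ewl _] := dc _ _ njl.
have elw : e l w by rewrite se.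
have hu : forall u, e l u -> u = w := deg1_uniq hl elw.
have hu' : forall u, e u l -> u = w by move=> u; rewrite se; apply hu.
have nwl : w != l by apply/eqP => hwl; move: elw; rewrite hwl ie.
pose S := predC1 l.
pose w' : {x in S} := Sub w nwl.
pose pi := fun v => insubd w' v.
have hpi : forall v, v != l -> val (pi v) = v.
  by move=> v hv; rewrite val_insubd ifT.
pose e' := fun a b : {x in S} => e (val a) (val b).
pose d' := fun a b : {x in S} => d (val a) (val b).
have hV' : #|{: {x in S}}| = N.+1 by rewrite card_sig cardC1 hV.
have se' : symmetric e' by move=> a b; apply: se.
have ie' : irreflexive e' by move=> a; apply: ie.
have hs' : (\sum_a \sum_b (e' a b : nat) = 2 * N)%N.
  have -> : (\sum_a \sum_b (e' a b : nat) = \sum_(u in S) \sum_(v in S) (e u v : nat))%N.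
    by rewrite [RHS]big_sub; apply: eq_bigr => a _; rewrite [RHS]big_sub.
  have hl1 : (\sum_j (e l j : nat) = 1)%N.
    apply/eqP; rewrite eqn_leq hl /=; rewrite (bigD1 w) //= elw; lia.
  have hcol : (\sum_(i in S) (e i l : nat) = 1)%N.
    rewrite (bigD1 w) //= ewl big1 // => i /andP[_ niw].
    by apply/eqP; rewrite eqb0; apply/negP => /hu' /eqP; rewrite (negbTE niw).
  have h2 : forall i, i != l -> (\sum_j (e i j : nat) = e i l + \sum_(v in S) (e i v : nat))%N.
    by move=> i _; rewrite (bigD1 l).
  move: hs; rewrite (bigD1 l) //= hl1 (eq_bigr _ h2) big_split /=.
  change (\sum_(i in S) (e i l : nat) = 1)%N in hcol.
  rewrite hcol => h; apply: (@addnI 2); transitivity (1 + (1 + \sum_(i | i != l) \sum_(v in S) (e i v : nat)))%N; first by rewrite addnA.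
  rewrite h; lia.
have hld : forall j, j != l -> d j l = (d j w).+1 := leaf_dist hb hu'.
have hb' : bfs e' d'.
  split.
  - by move=> a; apply: d0.
  - by move=> a b c; apply: db.
  move=> a b nab.
  have nab' : val a != val b by rewrite val_eqE.
  have [w0 ew0 hw0] := dc _ _ nab'.
  have nw0 : w0 != l.
    apply/eqP => hw0l; move: ew0 hw0; rewrite hw0l => /hu hb0.
    rewrite hb0 hld; [lia | exact: (valP a)].
  by exists (Sub w0 nw0).
have [cs' [hd' hn' hk']] := IH _ e' d' hV' se' ie' hs' hb'.
pose lift := fun A : {set {x in S}} => [set v | pi v \in A].
exists ([set l] :: map lift cs'); split.
- clear j njl; move=> i j /=.
  have -> : count (fun A : {set V} => (i \in A) != (j \in A)) (map lift cs') = d' (pi i) (pi j).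
    by rewrite hd' count_map; apply: eq_count => A; rewrite /= !inE.
  rewrite /d' !inE.
  have hpl : val (pi l) = w by rewrite val_insubd ifN // negbK.
  have dsym := bfs_sym se hb.
  case: (eqVneq i l) => [->|nil]; case: (eqVneq j l) => [->|njl'] /=.
  + by rewrite d0 hpl d0.
  + by rewrite hpl hpi // dsym hld // dsym.
  + by rewrite hpl hpi // hld.
  + by rewrite !hpi.
- move=> A; rewrite inE => /predU1P [-> | /mapP [A' hA' ->]].
    by split; [exists l; rewrite inE | exists w; rewrite inE].
  have [[a ha] [b hb0]] := hn' A' hA'.
  by split; [exists (val a) | exists (val b)]; rewrite inE /pi valKd.
- move=> x hx hc.
  have hxl : x l = 0%R by have := hc [set l] (mem_head _ _); rewrite big_set1.
  pose x' := fun a : {x in S} => x (val a).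
  have hx' : (\sum_a x' a = 0)%R.
    by rewrite -big_sub; move: hx; rewrite (bigD1 l) //= hxl add0r.
  have hc' : forall A', A' \in cs' -> (\sum_(a in A') x' a = 0)%R.
    move=> A' hA'; have := hc (lift A'); rewrite inE map_f ?orbT // => /(_ isT).
    rewrite (bigID (fun i => i == l)) /= big1 ?add0r; last by move=> i /andP[_ /eqP ->].
    rewrite (eq_bigl (fun i => (i \in S) && (i \in lift A'))); last by move=> i; rewrite andbC.
    rewrite big_sub_cond => h; apply: etrans _ h; apply: eq_bigl => a; rewrite inE /pi valKd //.
  move=> i; case: (eqVneq i l) => [->//|nil].
  exact: (hk' x' hx' hc' (Sub i nil)).
Qed.

Section Walk.
Variables (n : nat) (e : rel 'I_n).

Lemma walkP k i j : reflect (exists p : seq 'I_n, [/\ size p = k, path e i p & last i p = j])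
  (walk_of_length e k i j).
Proof.
apply: (iffP existsP) => [[p /andP[hp /eqP hl]] | [p [hs hp hl]]].
  by exists (val p); rewrite size_tuple.
have hs' : size p == k by rewrite hs.
by exists (Tuple hs'); rewrite /= hp hl eqxx.
Qed.

Lemma gdist_le k i j : (k < n)%N -> walk_of_length e k i j -> (gdist e i j <= k)%N.
Proof.
move=> hk hw; rewrite /gdist leqNgt; apply/negP => hlt.
by have := before_find 0%N hlt; rewrite nth_iota // add0n hw.
Qed.

Lemma gdist_walk k i j : (k < n)%N -> walk_of_length e k i j ->
  (gdist e i j < n)%N /\ walk_of_length e (gdist e i j) i j.
Proof.
move=> hk hw.
have hh : has (fun k => walk_of_length e k i j) (iota 0 n).
  by apply/hasP; exists k => //; rewrite mem_iota.
split; first by rewrite /gdist -[X in (_ < X)%N](size_iota 0 n) -has_find.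
have := nth_find 0%N hh; rewrite nth_iota ?add0n //.
by rewrite -[X in (_ < X)%N](size_iota 0 n) -has_find.
Qed.

Lemma conn_walk i j : connect e i j -> exists2 k, (k < n)%N & walk_of_length e k i j.
Proof.
move=> /connectP [p hp ->]; case: (shortenP hp) => p' hp' hu _.
exists (size p'); last by apply/walkP; exists p'.
have hc := card_uniqP hu; have := max_card (mem (i :: p')).
by rewrite hc /= card_ord.
Qed.

Lemma gdist_bfs : (forall i j, connect e i j) -> bfs e (gdist e).
Proof.
move=> hc.
have hw : forall i j, (gdist e i j < n)%N /\ walk_of_length e (gdist e i j) i j.
  by move=> i j; have [k hk hw] := conn_walk (hc i j); exact: gdist_walk hk hw.
have hb : forall i w j, e w j -> (gdist e i j <= (gdist e i w).+1)%N.
  move=> i w j ew; have [hlt /walkP [p [hs hp hl]]] := hw i w.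
  case: (ltnP (gdist e i w).+1 n) => hn.
    apply: gdist_le => //; apply/walkP; exists (rcons p j).
    by rewrite size_rcons hs rcons_path hp hl ew last_rcons.
  by have [h _] := hw i j; lia.
split => //.
- move=> i; have [h _] := hw i i; apply/eqP; rewrite -leqn0; apply: gdist_le.
    by have := ltn_ord i; lia.
  by apply/walkP; exists [::].
- move=> i j nij; have [hlt /walkP [p [hs hp hl]]] := hw i j.
  case/lastP: p hs hp hl => [|q y] hs hp hl; first by move: nij; rewrite -hl /= eqxx.
  move: hp; rewrite rcons_path => /andP [hq ey]; rewrite last_rcons in hl; subst y.
  exists (last i q) => //.
  have hle : (gdist e i (last i q) <= size q)%N.
    apply: gdist_le; first by move: hlt; rewrite -hs size_rcons; lia.
    by apply/walkP; exists q.
  have := hb i _ _ ey; move: hle; rewrite -hs size_rcons => h1 h2; apply/eqP; rewrite eqSS eqn_leq h1 -ltnS h2 //=.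
Qed.

Lemma edge_sum : symmetric e -> irreflexive e ->
  (\sum_i \sum_j (e i j : nat) = 2 * #|edge_set e|)%N.
Proof.
move=> se ie.
have h1 : forall i j, (e i j : nat) = ((i < j)%N && e i j) + ((j < i)%N && e j i).
  move=> i j; rewrite (se j i); case: (ltngtP (val i) (val j)) => hij; rewrite /= ?addn0 //.
  have -> : i = j by apply: val_inj.
  by rewrite ie.
have -> : (\sum_i \sum_j (e i j : nat) = \sum_(i : 'I_n) \sum_(j : 'I_n) (((i < j)%N && e i j) : nat)
     + \sum_(i : 'I_n) \sum_(j : 'I_n) (((j < i)%N && e j i) : nat))%N.
  rewrite -big_split; apply: eq_bigr => i _; rewrite -big_split; apply: eq_bigr => j _; exact: h1.
rewrite [X in (_ + X)%N]exchange_big /= addnn -mul2n; congr (2 * _)%N.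
rewrite /edge_set -sum1dep_card big_mkcond /=.
rewrite pair_bigA [RHS]big_mkcond /=; apply: eq_bigr => p _; by case: (_ && _).
Qed.
End Walk.
Local Open Scope ring_scope.

Section Alg.
Variable R : realFieldType.

Lemma qform n (D : 'M[R]_n) (c : R) (x : 'cV[R]_n) :
  (x^T *m (D *m (c *: const_mx 1 - 1%:M)) *m x) 0 0 =
  c * ((\sum_j (\sum_i x i 0 * \sum_k D i k) * x j 0))
  - \sum_j (\sum_i x i 0 * D i j) * x j 0.
Proof.
rewrite mulmxBr mulmx1 -scalemxAr mulmxBr mulmxBl -scalemxAr -scalemxAl.
rewrite !mxE; congr (_ * _ - _).
  apply: eq_bigr => j _; rewrite !mxE; congr (_ * _).
  apply: eq_bigr => i _; rewrite !mxE; congr (_ * _).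
  by apply: eq_bigr => k _; rewrite !mxE mulr1.
apply: eq_bigr => j _; rewrite !mxE; congr (_ * _).
by apply: eq_bigr => i _; rewrite !mxE.
Qed.

Lemma lin3 (I : finType) (F G H : I -> R) u v w :
  \sum_i (F i * u + G i * v - H i * w) =
  (\sum_i F i) * u + (\sum_i G i) * v - (\sum_i H i) * w.
Proof. by rewrite sumrB big_split /= -!mulr_suml. Qed.

Lemma cutL1 (I : finType) (X a : I -> R) :
  \sum_i X i * \sum_k (a i + a k - 2 * a i * a k) =
  (\sum_i X i * a i) * #|I|%:R + (\sum_i X i) * (\sum_k a k)
  - 2 * (\sum_i X i * a i) * (\sum_k a k).
Proof.
have h : forall i, \sum_k (a i + a k - 2 * a i * a k) =
   a i * #|I|%:R + (\sum_k a k) - 2 * a i * (\sum_k a k).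
  move=> i; rewrite sumrB big_split /= sumr_const -mulr_sumr -[a i *+ _]mulr_natr.
  by [].  
rewrite (eq_bigr (fun i => (X i * a i) * #|I|%:R + X i * (\sum_k a k)
   - (X i * a i) * (2 * \sum_k a k))); last by move=> i _; rewrite h; ring.
rewrite lin3; ring.
Qed.

Lemma cutL2 (I : finType) (X a : I -> R) :
  \sum_j (\sum_i X i * (a i + a j - 2 * a i * a j)) * X j =
  2 * (\sum_i X i * a i) * (\sum_i X i) - 2 * (\sum_i X i * a i) ^+ 2.
Proof.
have h : forall j, \sum_i X i * (a i + a j - 2 * a i * a j) =
   (\sum_i X i * a i) + (\sum_i X i) * a j - (\sum_i X i * a i) * (2 * a j).
  move=> j; rewrite (eq_bigr (fun i => (X i * a i) * 1 + X i * a j - (X i * a i) * (2 * a j))).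
    by rewrite lin3; ring.
  by move=> i _; ring.
rewrite (eq_bigr (fun j => X j * (\sum_i X i * a i) + (X j * a j) * (\sum_i X i)
   - (X j * a j) * (2 * \sum_i X i * a i))); last by move=> j _; rewrite h; ring.
rewrite lin3; ring.
Qed.
End Alg.

Lemma natr_count (R : pzSemiRingType) (T : Type) (p : pred T) (s : seq T) :
  (count p s)%:R = \sum_(A <- s) ((p A : nat)%:R : R).
Proof.
elim: s => [|A s IH]; first by rewrite big_nil.
by rewrite big_cons /= natrD IH.
Qed.

Unset Implicit Arguments. Set Strict Implicit. Set Printing Implicit Defensive.
Theorem mainTheorem12 (R : realType) (n : nat) (e : rel 'I_n) :
  (3 <= n)%N -> is_tree e ->
  let M := dist_matrix R e in
  let C := M *m ((2 / n%:R) *: const_mx 1 - 1%:M) in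
  forall x : 'cV[R]_n, x != 0 -> 0 < (x^T *m C *m x) 0 0.
Proof.
move=> hn [[se ie] hc hE] M C x hx.
have hb := gdist_bfs hc.
have hs : (\sum_i \sum_j (e i j : nat) = 2 * n.-1)%N by rewrite edge_sum // hE.
have hV : #|'I_n| = (n.-1).+1 by rewrite card_ord; lia.
have [cs [hd hnt hk]] := @tree_cuts R _ _ _ _ hV se ie hs hb.
pose X i := x i 0.
pose a (A : {set 'I_n}) i : R := (i \in A)%:R.
pose sep A i k := a A i + a A k - 2 * a A i * a A k.
have hM : forall i k, M i k = \sum_(A <- cs) sep A i k.
  move=> i k; rewrite /M /dist_matrix mxE hd natr_count; apply: eq_bigr => A _.
  by rewrite /sep /a; case: (i \in A); case: (k \in A); rewrite /=; ring.
rewrite /C qform.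
have T1 : \sum_j (\sum_i x i 0 * \sum_k M i k) * x j 0 =
    \sum_(A <- cs) ((\sum_i X i * \sum_k sep A i k) * \sum_j X j).
  rewrite -mulr_sumr -mulr_suml; congr (_ * _).
  rewrite exchange_big; apply: eq_bigr => i _ /=.
  rewrite -mulr_sumr; congr (_ * _).
  rewrite exchange_big; apply: eq_bigr => k _ /=; exact: hM.
have T2 : \sum_j (\sum_i x i 0 * M i j) * x j 0 =
    \sum_(A <- cs) \sum_j (\sum_i X i * sep A i j) * X j.
  rewrite exchange_big; apply: eq_bigr => j _ /=.
  rewrite -mulr_suml; congr (_ * _).
  rewrite exchange_big; apply: eq_bigr => i _ /=.
  by rewrite -mulr_sumr hM.
rewrite T1 T2 mulr_sumr -sumrB.
pose alpha A := \sum_i X i * a A i.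
pose S := \sum_i X i.
have hf : forall A, 2 / n%:R * ((\sum_i X i * \sum_k sep A i k) * \sum_j X j) -
     \sum_j (\sum_i X i * sep A i j) * X j =
   2 / n%:R * ((#|~: A|%:R) * alpha A ^+ 2 + #|A|%:R * (S - alpha A) ^+ 2).
  move=> A; rewrite /sep cutL1 cutL2.
  have hK : \sum_k a A k = #|A|%:R.
    rewrite -sumr_const [RHS]big_mkcond; apply: eq_bigr => k _.
    by rewrite /a; case: (k \in A).
  have hC : (#|~: A|%:R : R) = n%:R - #|A|%:R.
    have h : (#|A| + #|~: A| = n)%N by rewrite cardsC card_ord.
    by apply/eqP; rewrite eq_sym subr_eq -natrD addnC h.
  have hn0 : (n%:R : R) != 0 by rewrite pnatr_eq0; lia.
  by rewrite hK card_ord hC /alpha /S; field.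
rewrite (eq_bigr _ (fun A _ => hf A)).
have hn0 : 0 < (n%:R : R) by rewrite ltr0n; lia.
have hcard : forall A, A \in cs -> 0 < (#|A|%:R : R) /\ 0 < (#|~: A|%:R : R).
  move=> A hA; have [[a0 ha0] [b0 hb0]] := hnt A hA.
  by split; rewrite ltr0n; apply/card_gt0P; [exists a0 | exists b0; rewrite inE].
have h2n : 0 < 2 / (n%:R : R) by rewrite divr_gt0.
have hge : forall A, A \in cs ->
   0 <= 2 / n%:R * (#|~:A|%:R * alpha A ^+ 2 + #|A|%:R * (S - alpha A) ^+ 2).
  move=> A hA; have [h1 h2] := hcard A hA.
  apply: mulr_ge0; first exact: ltW.
  by apply: addr_ge0; apply: mulr_ge0; rewrite ?sqr_ge0 ?ltW.
have [A hA hAn] : exists2 A, A \in cs & (alpha A != 0) || (S - alpha A != 0).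
  case: (boolP (has (fun A => (alpha A != 0) || (S - alpha A != 0)) cs)) =>
    [/hasP [A hA h]|/hasPn hno]; first by exists A.
  exfalso; move/negP: hx; apply; apply/eqP/matrixP => i j; rewrite (ord1 j) mxE.
  have hal : forall A, A \in cs -> alpha A = 0 /\ S = 0.
    move=> A hA; have := hno A hA; rewrite negb_or !negbK => /andP [/eqP h1 /eqP h2].
    by split => //; move: h2; rewrite h1 subr0.
  have hS : S = 0.
    have n1 : (1 < n)%N by lia.
    have n0 : (0 < n)%N by lia.
    have hne : Ordinal n0 != Ordinal n1 by [].
    have [d0 db dc] := hb.
    have [w _ hw] := dc _ _ hne.
    have : has (fun A : {set 'I_n} => (Ordinal n0 \in A) != (Ordinal n1 \in A)) cs.
      by rewrite has_count -hd -hw.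
    by move=> /hasP [A0 hA0 _]; have [] := hal A0 hA0.
  apply: (hk X) => // A1 hA1; have [h1 _] := hal A1 hA1.
  apply: etrans _ h1; rewrite /alpha [LHS]big_mkcond; apply: eq_bigr => k _.
  by rewrite /a; case: (k \in A1); rewrite ?mulr1 ?mulr0.
rewrite (big_rem A hA) /=.
have hrest : 0 <= \sum_(B <- rem A cs)
   2 / n%:R * (#|~:B|%:R * alpha B ^+ 2 + #|B|%:R * (S - alpha B) ^+ 2).
  rewrite big_seq_cond; apply: sumr_ge0 => B /andP [hB _]; apply: hge.
  exact: mem_rem hB.
have [h1 h2] := hcard A hA.
have hpos : 0 < 2 / n%:R * (#|~:A|%:R * alpha A ^+ 2 + #|A|%:R * (S - alpha A) ^+ 2).
  apply: mulr_gt0 => //.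
  have s1 := sqr_ge0 (alpha A); have s2 := sqr_ge0 (S - alpha A).
  have m1 := mulr_ge0 (ltW h2) s1; have m2 := mulr_ge0 (ltW h1) s2.
  case/orP: hAn => h.
    have : 0 < alpha A ^+ 2 by rewrite lt0r sqrf_eq0 h sqr_ge0.
    move/(mulr_gt0 h2) => m3; lra.
  have : 0 < (S - alpha A) ^+ 2 by rewrite lt0r sqrf_eq0 h sqr_ge0.
  move/(mulr_gt0 h1) => m3; lra.
lra.
Qed.
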